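(* $\mathsf{Distinctness}\in\mathsf{dMAM}[O(\log n)]$, where in $\mathsf{Distinctness}$ each node $u$ of the $n$-node communication graph holds a value $a_u\in\{0,1\}^{c\log n}$ (for a fixed constant $c$) and the instance is in the language iff $a_u\neq a_v$ for all distinct nodes $u\neq v$.
   Context: Distributed interactive proofs (model). An instance consists of a connected communication graph $G=(V,E)$ with $|V|=n$, where each node has a unique identifier of $O(\log n)$ bits, knows $n$, knows its own identifier, its local input (if the problem has local inputs), and the identifiers of its neighbours (with an arbitrary port numbering of its incident edges). A prover, who sees the whole instance, interacts with all nodes in $r$ alternating messages. In a verifier (node) message each node independently samples fresh uniformly random bits and sends them to the prover (public coins). In a prover message the prover sends each node a string. Nodes may additionally exchange the strings they received from the prover with their neighbours in $G$. At the end each node deterministically accepts or rejects as a function of its local information, its own random bits, the strings it received from the prover and those its neighbours received; the instance is accepted iff all nodes accept. The proof size is the maximum number of bits in any single message between the prover and any node. A language $\mathcal L$ (set of instances) is in $\mathsf{dIP}[r,\ell]$ if there is an $r$-message protocol of proof size $\ell=\ell(n)$ such that (completeness) for every instance in $\mathcal L$ some prover makes all nodes accept with probability $>2/3$, and (soundness) for every instance not in $\mathcal L$ and every prover, all nodes accept with probability $<1/3$ (probabilities over the nodes' coins). $\mathsf{dAM}[\ell]$, $\mathsf{dMAM}[\ell]$, $\mathsf{dAMAM}[\ell]$, $\mathsf{dMAMAM}[\ell]$ denote the cases of 2, 3, 4, 5 messages, where the letters indicate who sends each message in order (A = nodes send random coins, M = prover). *)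

(* Defs.v *)
From mathcomp Require Import all_boot.
Set Implicit Arguments. Unset Strict Implicit. Unset Printing Implicit Defensive.

Definition bits := seq bool.

Record instance (X : nat -> Type) := Inst {
  inst_n : nat;
  inst_adj : rel 'I_inst_n;
  inst_id : 'I_inst_n -> nat;
  inst_input : 'I_inst_n -> X inst_n }.
Arguments inst_n {X} i.
Arguments inst_adj {X} i.
Arguments inst_id {X} i.
Arguments inst_input {X} i.

Definition idbits (kid n : nat) : nat := kid * (trunc_log 2 n).+1.

Definition wf_instance (X : nat -> Type) (kid : nat) (I : instance X) : Prop :=
  [/\ symmetric (inst_adj I), irreflexive (inst_adj I),
      (forall u v, connect (inst_adj I) u v),
      injective (inst_id I) &
      (forall u, inst_id I u < 2 ^ idbits kid (inst_n I))].

(* a port numbering: for every node, a duplicate-free list of its neighbours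
   (port i of u leads to the i-th element of the list) *)
Definition port_numbering (X : nat -> Type) (I : instance X)
  (ports : 'I_(inst_n I) -> seq 'I_(inst_n I)) : Prop :=
  forall u, uniq (ports u) /\ (forall v, (v \in ports u) = inst_adj I u v).

(* Decision function of a node in a 3-message (M A M) protocol, knowing n:
   own identifier, own input, own random bits, own two prover strings,
   and, in port order, (identifier, first prover string, second prover string)
   of each neighbour. *)
Definition decision (X : nat -> Type) (rlen : nat -> nat) :=
  forall n : nat, nat -> X n -> (rlen n).-tuple bool -> bits -> bits ->
    seq (nat * bits * bits) -> bool.

Definition all_accept (X : nat -> Type) (rlen : nat -> nat) (dec : decision X rlen)
  (I : instance X) (ports : 'I_(inst_n I) -> seq 'I_(inst_n I))
  (P1 : 'I_(inst_n I) -> bits)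
  (P2 : {ffun 'I_(inst_n I) -> (rlen (inst_n I)).-tuple bool} -> 'I_(inst_n I) -> bits)
  (r : {ffun 'I_(inst_n I) -> (rlen (inst_n I)).-tuple bool}) : bool :=
  [forall u, dec (inst_n I) (inst_id I u) (inst_input I u) (r u) (P1 u) (P2 r u)
               [seq (inst_id I v, P1 v, P2 r v) | v <- ports u]].

Definition n_accept (X : nat -> Type) (rlen : nat -> nat) (dec : decision X rlen)
  (I : instance X) (ports : 'I_(inst_n I) -> seq 'I_(inst_n I))
  (P1 : 'I_(inst_n I) -> bits)
  (P2 : {ffun 'I_(inst_n I) -> (rlen (inst_n I)).-tuple bool} -> 'I_(inst_n I) -> bits)
  : nat :=
  #|[pred r | all_accept dec ports P1 P2 r]|.

Definition n_coins (rlen : nat -> nat) (n : nat) : nat :=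
  #|{ffun 'I_n -> (rlen n).-tuple bool}|.

(* L in dMAM[ell] (identifiers of kid*(log n + 1) bits). Probabilities:
   accept prob > 2/3  <->  3 * #accepting > 2 * #coins ;
   accept prob < 1/3  <->  3 * #accepting < #coins. *)
Definition dMAM (X : nat -> Type) (kid : nat) (L : instance X -> Prop)
  (ell : nat -> nat) : Prop :=
  exists (rlen : nat -> nat) (dec : decision X rlen),
    (forall n, rlen n <= ell n) /\
    forall (I : instance X), wf_instance kid I ->
    forall ports, port_numbering ports ->
      (L I -> exists (P1 : 'I_(inst_n I) -> bits)
                (P2 : {ffun 'I_(inst_n I) -> (rlen (inst_n I)).-tuple bool} ->
                      'I_(inst_n I) -> bits),
          (forall u, size (P1 u) <= ell (inst_n I)) /\
          (forall r u, size (P2 r u) <= ell (inst_n I)) /\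
          2 * n_coins rlen (inst_n I) < 3 * n_accept dec ports P1 P2)
      /\
      (~ L I -> forall (P1 : 'I_(inst_n I) -> bits)
                  (P2 : {ffun 'I_(inst_n I) -> (rlen (inst_n I)).-tuple bool} ->
                        'I_(inst_n I) -> bits),
          3 * n_accept dec ports P1 P2 < n_coins rlen (inst_n I)).

Definition dMAM_Olog (X : nat -> Type) (kid : nat) (L : instance X -> Prop) : Prop :=
  exists (C : nat) (ell : nat -> nat),
    (forall n, ell n <= C * (trunc_log 2 n).+1) /\ dMAM kid L ell.

Definition dist_input (c : nat) (n : nat) : Type := (c * up_log 2 n).-tuple bool.

Definition distinctness (c : nat) (I : instance (dist_input c)) : Prop :=
  forall u v : 'I_(inst_n I), u != v -> inst_input I u != inst_input I v.

(* Main.v *)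
Require Import Defs.
From mathcomp Require Import all_boot all_order all_algebra finfield zify.
Set Implicit Arguments. Unset Strict Implicit. Unset Printing Implicit Defensive.
Import GRing.Theory.


Fixpoint nat2bits (k x : nat) : bits :=
  if k is k'.+1 then odd x :: nat2bits k' x./2 else [::].
Fixpoint bits2nat (s : bits) : nat :=
  if s is b :: s' then b + (bits2nat s').*2 else 0.

Lemma size_nat2bits k x : size (nat2bits k x) = k.
Proof. by elim: k x => //= k IH x; rewrite IH. Qed.

Lemma nat2bitsK k x : x < 2 ^ k -> bits2nat (nat2bits k x) = x.
Proof.
elim: k x => [|k IH] x /=; first by rewrite expn0; case: x.
move=> hx; rewrite IH ?odd_double_half //.
by rewrite ltn_half_double -mul2n -expnS.
Qed.

Lemma bits2nat_lt s : bits2nat s < 2 ^ size s.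
Proof.
elim: s => //= b s IH; rewrite expnS mul2n.
case: b => /=; last by rewrite add0n ltn_double.
by rewrite add1n ltn_Sdouble.
Qed.

Lemma bits2nat_inj s t : size s = size t -> bits2nat s = bits2nat t -> s = t.
Proof.
elim: s t => [|b s IH] [|b' t] //= [hs] h.
have ho : b = b'.
  by move: (congr1 odd h); rewrite !oddD !odd_double !oddb !addbF.
move: h; rewrite -ho => h; congr cons; apply: IH => //.
by apply: double_inj; apply/eqP; rewrite -(eqn_add2l b) h.
Qed.

Fixpoint getf (W j : nat) (s : bits) : bits :=
  if j is j'.+1 then getf W j' (drop W s) else take W s.

Lemma getf0 W l r : size l = W -> getf W 0 (l ++ r) = l.
Proof. by move=> <- /=; rewrite take_size_cat. Qed.
Lemma getfS W j l r : size l = W -> getf W j.+1 (l ++ r) = getf W j r.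
Proof. by move=> <- /=; rewrite drop_size_cat. Qed.
Lemma count_enum_card (I : finType) (P : pred I) : count P (enum I) = #|[pred u | P u]|.
Proof. rewrite cardE /enum_mem size_filter (@eq_filter _ _ predT) ?filter_predT //. Qed.

Lemma count_split (T : Type) (a b : pred T) (s : seq T) :
  count a s = count (fun x => a x && b x) s + count (fun x => a x && ~~ b x) s.
Proof. elim: s => //= x s ->; case: (a x); case: (b x) => /=; lia. Qed.

Lemma key_distinct (I : finType) (T : eqType) (k : T -> nat) (e s : I -> T) :
  perm_eq [seq e u | u <- enum I] [seq s u | u <- enum I] ->
  #|[pred u | ~~ (k (e u) < k (s u))]| <= 1 ->
  forall u1 u2, u1 != u2 -> e u1 != e u2.
Proof.
move=> hp hW u1 u2 hne; apply/negP => /eqP heq.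
set t := k (e u1).
have hAB : count (fun u => k (e u) <= t) (enum I) = count (fun u => k (s u) <= t) (enum I).
  by move/permP: hp => /(_ (fun z => k z <= t)); rewrite !count_map.
rewrite (count_split _ (fun u => k (s u) <= t)) [RHS](count_split _ (fun u => k (e u) <= t)) in hAB.
have hb : count (fun x => (k (e x) <= t) && (k (s x) <= t)) (enum I) =
          count (fun x => (k (s x) <= t) && (k (e x) <= t)) (enum I).
  by apply: eq_count => x; rewrite andbC.
rewrite hb in hAB; move/eqP: hAB; rewrite eqn_add2l => /eqP.
rewrite !count_enum_card => hud.
have hdown : forall v, v \in [pred u | (k (s u) <= t) && ~~ (k (e u) <= t)] ->
   [/\ v \in [pred u | ~~ (k (e u) < k (s u))], v != u1 & v != u2].
  move=> v; rewrite !inE => /andP[h1 h2]; rewrite -ltnNge in h2; split.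
  - by rewrite -leqNgt (leq_trans h1) // ltnW.
  - by apply/eqP => hv; move: h2; rewrite hv ltnn.
  - by apply/eqP => hv; move: h2; rewrite hv -heq ltnn.
have hu1 : (u1 \in [pred u | ~~ (k (e u) < k (s u))]) || ((k (e u1) <= t) && ~~ (k (s u1) <= t)).
  by rewrite inE /t leqnn /= -leqNgt orbN.
have hu2 : (u2 \in [pred u | ~~ (k (e u) < k (s u))]) || ((k (e u2) <= t) && ~~ (k (s u2) <= t)).
  by rewrite inE /t heq leqnn /= -leqNgt orbN.
move/card_le1_eqP: hW => hW.
set W := [pred u | ~~ (k (e u) < k (s u))] in hdown hu1 hu2 hW.
set D := [pred u | (k (s u) <= t) && ~~ (k (e u) <= t)] in hud hdown.
set U := [pred u | (k (e u) <= t) && ~~ (k (s u) <= t)] in hud.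
have D0 : (u1 \in W) || (u2 \in W) -> #|D| = 0.
  move=> hw; apply: eq_card0 => v; rewrite [in RHS]inE; apply/negbTE.
  apply/negP => hv; have [hvW hv1 hv2] := hdown v hv.
  case/orP: hw => hw.
  - by move: hv1; rewrite (hW _ _ hvW hw) eqxx.
  - by move: hv2; rewrite (hW _ _ hvW hw) eqxx.
have Dle1 : #|D| <= 1.
  apply/card_le1_eqP => x y hx hy.
  by have [hxW _ _] := hdown x hx; have [hyW _ _] := hdown y hy; apply: hW.
case/orP: hu1 => h1.
- case/orP: hu2 => h2.
  + by move: hne; rewrite (hW _ _ h1 h2) eqxx.
  + have : 0 < #|U| by apply/card_gt0P; exists u2.
    by rewrite hud D0 ?h1.
- case/orP: hu2 => h2.
  + have : 0 < #|U| by apply/card_gt0P; exists u1.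
    by rewrite hud D0 ?h2 ?orbT.
  + have : 2 <= #|U|.
      have <- : #|[set u1; u2]| = 2 by rewrite cards2 hne.
      apply: subset_leq_card.
      by apply/subsetP => v; rewrite !inE => /orP[] /eqP ->.
    by rewrite hud => /(leq_trans)/(_ Dle1).
Qed.


Section PolyL.
Local Open Scope ring_scope.
Lemma prod_XsubC_perm (F : fieldType) (l1 l2 : seq F) :
  \prod_(a <- l1) ('X - a%:P) = \prod_(b <- l2) ('X - b%:P) -> perm_eq l1 l2.
Proof.
elim: l1 l2 => [|a l1 IH] l2.
  rewrite big_nil => h; case: l2 h => // b l2 h.
  have := congr1 (fun p : {poly F} => size p) h.
  by rewrite size_poly1 size_prod_XsubC.
rewrite big_cons => h.
have ha : a \in l2 by rewrite -root_prod_XsubC -h rootM root_XsubC eqxx.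
have hp := perm_to_rem ha.
rewrite (perm_big _ hp) big_cons /= in h.
have := mulfI (monic_neq0 (monicXsubC a)) h.
move/IH => h2; rewrite perm_sym (perm_trans hp) // perm_cons perm_sym //.
Qed.
End PolyL.


Section Tele.
Variables (R : Type) (idx : R) (op : Monoid.com_law idx).
Local Notation "\op_ ( i | P ) F" := (\big[op/idx]_(i | P) F) (at level 41, F at level 41, i at level 50).

Lemma tele_gen (I : finType) (F w : I -> R) (nr : pred I) (par : I -> I)
    (ch : I -> I -> bool) :
  (forall u v, ch u v = nr v && (par v == u)) ->
  (forall u, F u = op (w u) (\big[op/idx]_(v | ch u v) F v)) ->
  \big[op/idx]_u F u = op (\big[op/idx]_u w u) (\big[op/idx]_(v | nr v) F v).
Proof.
move=> hch hF.
rewrite (eq_bigr _ (fun u _ => hF u)) big_split /=; congr (op _ _).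
rewrite [RHS](partition_big par xpredT) //=.
by apply: eq_bigr => u _; apply: eq_bigl => v; rewrite hch.
Qed.
End Tele.

Lemma tele_sum (I : finType) (F w : I -> nat) (nr : pred I) (par : I -> I)
    (ch : I -> I -> bool) :
  (forall u v, ch u v = nr v && (par v == u)) ->
  (forall u, F u = w u + \sum_(v | ch u v) F v)%N ->
  \sum_(u | ~~ nr u) F u = \sum_u w u.
Proof.
move=> hch hF; have := tele_gen hch hF.
rewrite (bigID nr) /= addnC => /eqP; rewrite eqn_add2r => /eqP //.
Qed.

Section TP.
Local Open Scope ring_scope.
Lemma tele_prod (K : fieldType) (I : finType) (F w : I -> K) (nr : pred I) (par : I -> I)
    (ch : I -> I -> bool) :
  (forall u v, ch u v = nr v && (par v == u)) ->
  (forall v, nr v -> F v != 0) ->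
  (forall u, F u = w u * \prod_(v | ch u v) F v) ->
  \prod_(u | ~~ nr u) F u = \prod_u w u.
Proof.
move=> hch hnz hF; have := tele_gen hch hF.
rewrite (bigID nr) /= mulrC; apply: mulIf.
by apply/prodf_neq0 => v; apply: hnz.
Qed.
End TP.

Lemma card_ffun_at (I T : finType) (u0 : I) (P : pred T) :
  #|[pred r : {ffun I -> T} | P (r u0)]| = (#|[pred t | P t]| * #|T| ^ (#|I|).-1)%N.
Proof.
pose Fm := fun x : I => if x == u0 then [pred t | P t] else [pred t : T | true].
have -> : #|[pred r : {ffun I -> T} | P (r u0)]| = #|(family Fm : simpl_pred {ffun I -> T})|.
  apply: eq_card => r; rewrite !inE; apply/idP/familyP.
  - by move=> h x; rewrite /Fm; case: eqP => [->|] //.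
  - by move/(_ u0); rewrite /Fm eqxx.
rewrite card_family.
have -> : foldr muln 1 [seq #|Fm x| | x : I] = \prod_(x : I) #|Fm x|.
  by rewrite foldrE big_map big_enum.
rewrite (bigD1 u0) //= /Fm eqxx; congr (_ * _).
rewrite (eq_bigr (fun _ => #|T|)); last by move=> x /negbTE ->; apply: eq_card => t; rewrite !inE.
rewrite prod_nat_const; congr (_ ^ _).
by rewrite cardC1.
Qed.
Section BFS.
Variables (I : finType) (e : rel I) (u0 : I).
Hypothesis esym : symmetric e.
Hypothesis econn : forall u v, connect e u v.

Definition reachk (v : I) (k : nat) : bool :=
  [exists p : k.-tuple I, path e u0 p && (last u0 p == v)].

Lemma reachkP v k : reflect (exists p, [/\ path e u0 p, last u0 p = v & size p = k]) (reachk v k).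
Proof.
apply: (iffP existsP) => [[p /andP[hp /eqP hl]]|[p [hp hl hs]]].
  by exists (val p); rewrite size_tuple.
have hs' : size p == k by rewrite hs.
by exists (Tuple hs'); rewrite /= hp hl eqxx.
Qed.

Lemma reach_ex v : exists k, reachk v k.
Proof.
by have /connectP[p hp hl] := econn u0 v; exists (size p); apply/reachkP; exists p.
Qed.

Definition bfsd (v : I) : nat := ex_minn (reach_ex v).

Lemma bfsd_reach v : reachk v (bfsd v).
Proof. by rewrite /bfsd; case: ex_minnP. Qed.

Lemma bfsd_min v k : reachk v k -> bfsd v <= k.
Proof. by rewrite /bfsd; case: ex_minnP => m _ hm /hm. Qed.

Lemma bfsd_lt v : bfsd v < #|I|.
Proof.
have /connectP[p hp hl] := econn u0 v.
rewrite hl; case: (shortenP hp) => p' hp' hu _.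
apply: (@leq_trans (size p').+1).
  by rewrite ltnS; apply: bfsd_min; apply/reachkP; exists p'; split.
by rewrite -[(size p').+1]/(size (u0 :: p')) -(card_uniqP hu) max_card.
Qed.

Lemma bfsd_u0 : bfsd u0 = 0.
Proof. by apply/eqP; rewrite -leqn0; apply: bfsd_min; apply/reachkP; exists [::]. Qed.

Lemma bfsd_eq0 v : bfsd v = 0 -> v = u0.
Proof. by move=> h; have := bfsd_reach v; rewrite h => /reachkP[p [_ <- hs]]; case: p hs. Qed.

Lemma bfsd_par v : 0 < bfsd v -> exists w, e v w && (bfsd w == (bfsd v).-1).
Proof.
move=> hv; have /reachkP[p [hp hl hs]] := bfsd_reach v.
case/lastP: p hp hl hs => [|q x]; first by move=> _ _ hs; move: hv; rewrite -hs.
rewrite rcons_path last_rcons size_rcons => /andP[hq hx] hxv hs; subst x.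
exists (last u0 q); rewrite esym hx /=.
have h1 : bfsd (last u0 q) <= size q by apply: bfsd_min; apply/reachkP; exists q.
have h2 : size q <= bfsd (last u0 q).
  have /reachkP[q' [hq' hl' hs']] := bfsd_reach (last u0 q).
  have : bfsd v <= size (rcons q' v).
    by apply: bfsd_min; apply/reachkP; exists (rcons q' v); rewrite rcons_path hq' hl' hx last_rcons.
  by rewrite size_rcons hs' -hs ltnS.
by rewrite -hs /=; apply/eqP/anti_leq; rewrite h1 h2.
Qed.
End BFS.

Definition FF (k : nat) : finFieldType := s2val (@pPrimePowerField 2 k.+1 isT isT).
Lemma card_FF k : #|FF k| = 2 ^ k.+1.
Proof. by rewrite /FF; case: (@pPrimePowerField _ _ _ _) => F /= _ ->. Qed.

Section Proto.
Variables c kid : nat.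

Definition mk n := c * up_log 2 n + up_log 2 n + 1.
Definition mb n := (mk n).+1.
Definition Fn n : finFieldType := FF (mk n).
Definition Wd n := kid * (trunc_log 2 n).+1 + mb n.
Definition fdec n (b : bits) : Fn n := nth 0%R (enum (Fn n)) (bits2nat b).
Definition key n (y : Fn n) : nat := index y (enum (Fn n)).
Definition fenc n (y : Fn n) : bits := nat2bits (Wd n) (key y).
Definition nenc n (x : nat) : bits := nat2bits (Wd n) x.
Definition gtf n j s := getf (Wd n) j s.
Definition rid n p := bits2nat (gtf n 0 p).
Definition pid n p := bits2nat (gtf n 1 p).
Definition dst n p := bits2nat (gtf n 2 p).
Definition sv n p : Fn n := fdec n (gtf n 3 p).
Definition xv n q : Fn n := fdec n (gtf n 0 q).
Definition fv n q : Fn n := fdec n (gtf n 1 q).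
Definition gv n q : Fn n := fdec n (gtf n 2 q).
Definition emb n (a : dist_input c n) : Fn n := fdec n a.
Definition isch n (i : nat) (nb : nat * bits * bits) :=
  (pid n nb.1.2 == i) && (dst n nb.1.2 != 0).

Definition dec : decision (dist_input c) mb := fun n i a r p q nbrs =>
 let ch := [seq nb <- nbrs | isch n i nb] in
 [&& all (fun nb => rid n nb.1.2 == rid n p) nbrs,
     all (fun nb => xv n nb.2 == xv n q) nbrs,
     (dst n p == 0) == (i == rid n p),
     (dst n p == 0) || has (fun nb => (nb.1.1 == pid n p) && (dst n nb.1.2 == (dst n p).-1)) nbrs,
     (dst n p == 0) || (key (emb a) < key (sv n p)),
     (fv n q == (xv n q - emb a) * \prod_(nb <- ch) fv n nb.2)%R,
     (gv n q == (xv n q - sv n p) * \prod_(nb <- ch) gv n nb.2)%R,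
     fv n q != 0%R,
     gv n q != 0%R &
     (dst n p != 0) || ((fv n q == gv n q) && (xv n q == fdec n r))].

End Proto.

Lemma big_nbrs (R : Type) (idx : R) (op : Monoid.com_law idx) (T : finType) (T' : Type)
  (s : seq T) (tr : T -> T') (a : pred T') (G : T' -> R) : uniq s ->
  \big[op/idx]_(nb <- [seq x <- map tr s | a x]) G nb =
  \big[op/idx]_(v | (v \in s) && a (tr v)) G (tr v).
Proof.
move=> us; rewrite filter_map big_map big_uniq ?filter_uniq //.
by apply: eq_bigl => v; rewrite mem_filter andbC.
Qed.

Lemma conn_const (T : finType) (e : rel T) (A : Type) (f : T -> A) :
  (forall u v, e u v -> f v = f u) -> forall u v, connect e u v -> f v = f u.
Proof.
move=> h u v /connectP[p hp ->]; elim: p u hp => //= w p IH u /andP[huw hp].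
by rewrite (IH w hp); apply: h.
Qed.

Section Codec.
Variables c kid : nat.

Lemma size_enumF n : size (enum (Fn c n)) = 2 ^ mb c n.
Proof. by rewrite -cardE card_FF. Qed.

Lemma mb_le_Wd n : mb c n <= Wd c kid n.
Proof. by rewrite /Wd leq_addl. Qed.

Lemma key_lt n (y : Fn c n) : key y < 2 ^ mb c n.
Proof. by rewrite /key -size_enumF index_mem mem_enum. Qed.

Lemma key_ltW n (y : Fn c n) : key y < 2 ^ Wd c kid n.
Proof. by apply: (leq_trans (key_lt y)); rewrite leq_exp2l // mb_le_Wd. Qed.

Lemma fencK n (y : Fn c n) : fdec c n (nat2bits (Wd c kid n) (key y)) = y.
Proof. by rewrite /fdec nat2bitsK ?key_ltW // /key nth_index // mem_enum. Qed.

Lemma fdec_inj n (s t : bits) : size s <= mb c n -> size s = size t ->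
  fdec c n s = fdec c n t -> s = t.
Proof.
move=> hs hst h; apply: bits2nat_inj => //.
have hlt u : size u <= mb c n -> bits2nat u < size (enum (Fn c n)).
  by move=> hu; rewrite size_enumF (leq_trans (bits2nat_lt u)) // leq_exp2l.
apply/eqP; rewrite -(nth_uniq 0%R (hlt s hs) (hlt t _) (enum_uniq (Fn c n))) -?hst //.
by apply/eqP; exact: h.
Qed.

Lemma emb_inj n : injective (@emb c n).
Proof.
move=> a b h; apply: val_inj; apply: (fdec_inj (n := n)) => //.
  by rewrite size_tuple /mb /mk; lia.
by rewrite !size_tuple.
Qed.

Lemma key_inj n : injective (@key c n).
Proof.
by move=> x y h; rewrite -[x](nth_index 0%R (mem_enum _ x)) -[y](nth_index 0%R (mem_enum _ y)) -/(key x) h.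
Qed.

End Codec.

Section Sound.
Variables (c kid : nat) (I : instance (dist_input c)).
Hypothesis hwf : wf_instance kid I.
Variable ports : 'I_(inst_n I) -> seq 'I_(inst_n I).
Hypothesis hpn : port_numbering ports.
Variable P1 : 'I_(inst_n I) -> bits.
Variable P2 : {ffun 'I_(inst_n I) -> (mb c (inst_n I)).-tuple bool} -> 'I_(inst_n I) -> bits.

Local Notation N := (inst_n I).
Local Notation V := ('I_(inst_n I)).
Local Notation ID := (inst_id I).
Local Notation adj := (inst_adj I).
Local Notation Fq := (Fn c (inst_n I)).
Local Notation RT := {ffun 'I_(inst_n I) -> (mb c (inst_n I)).-tuple bool}.

Definition accu (r : RT) u := @dec c kid N (ID u) (inst_input I u) (r u) (P1 u) (P2 r u)
   [seq (ID v, P1 v, P2 r v) | v <- ports u].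

Definition Ee (u : V) : Fq := emb (inst_input I u).
Definition Su (u : V) : Fq := sv c kid N (P1 u).
Definition Du (u : V) := dst c kid N (P1 u).
Definition PIDu (u : V) := pid c kid N (P1 u).
Definition RIDu (u : V) := rid c kid N (P1 u).
Definition Xr (r : RT) (u : V) : Fq := xv c kid N (P2 r u).
Definition FVr (r : RT) (u : V) : Fq := fv c kid N (P2 r u).
Definition GVr (r : RT) (u : V) : Fq := gv c kid N (P2 r u).
Definition chG (u v : V) := (v \in ports u) && ((PIDu v == ID u) && (Du v != 0)).
Definition par (v : V) := odflt v [pick w | ID w == PIDu v].

Lemma adj_ports u v : (v \in ports u) = adj u v.
Proof. by case: (hpn u) => _ ->. Qed.

Lemma acc_facts1 (r : RT) u : accu r u ->
  [/\ (forall v, v \in ports u -> RIDu v = RIDu u),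
      (forall v, v \in ports u -> Xr r v = Xr r u),
      (Du u == 0) = (ID u == RIDu u),
      (Du u != 0 -> exists2 w, w \in ports u & (ID w == PIDu u) && (Du w == (Du u).-1)) &
      (Du u != 0 -> key (Ee u) < key (Su u))].
Proof.
rewrite /accu /dec => /and5P[h1 h2 /eqP h3 h4 /and5P[h5 _ _ _ _]]; split => //.
- by move: h1; rewrite all_map => /allP h v /h /eqP.
- by move: h2; rewrite all_map => /allP h v /h /eqP.
- by move=> hd; move: h4; rewrite (negbTE hd) /= has_map => /hasP[w hw /= hh]; exists w.
- by move=> hd; move: h5; rewrite (negbTE hd).
Qed.

Lemma acc_facts2 (r : RT) u : accu r u ->
  [/\ FVr r u = (Xr r u - Ee u) * \prod_(v | chG u v) FVr r v,
      GVr r u = (Xr r u - Su u) * \prod_(v | chG u v) GVr r v,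
      FVr r u != 0, GVr r u != 0 &
      (Du u = 0 -> FVr r u = GVr r u /\ Xr r u = fdec c N (r u))]%R.
Proof.
rewrite /accu /dec => /and5P[_ _ _ _ /and5P[_ /eqP h6 /eqP h7 h8 /andP[h9 h10]]].
have us := (hpn u).1.
split => //.
- by rewrite /FVr h6 big_nbrs.
- by rewrite /GVr h7 big_nbrs.
- by move=> hd; move: h10; rewrite /Du in hd; rewrite hd eqxx /= /FVr /GVr /Xr => /andP[/eqP -> /eqP ->].
Qed.

Lemma L_struct (r : RT) (u1 : V) : (forall u, accu r u) ->
  exists u0, [/\ Du u0 = 0, (forall v, Du v = 0 -> v = u0),
     (forall u, u != u0 -> key (Ee u) < key (Su u)) &
     (\prod_u (fdec c N (r u0) - Ee u) = \prod_u (fdec c N (r u0) - Su u))%R].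
Proof.
move=> hacc.
have [hsym _ hconn hinj _] := hwf.
have hRID u v : RIDu v = RIDu u.
  apply: (conn_const (e := adj)) (hconn u v) => x y hxy.
  by have [h _ _ _ _] := acc_facts1 (hacc x); apply: h; rewrite adj_ports.
have hX u v : Xr r v = Xr r u.
  apply: (conn_const (e := adj)) (hconn u v) => x y hxy.
  by have [_ h _ _ _] := acc_facts1 (hacc x); apply: h; rewrite adj_ports.
have [u0 _ hmin] := @arg_minnP _ u1 xpredT Du isT.
have hu0 : Du u0 = 0.
  apply/eqP/negPn/negP => hd.
  have [_ _ _ h _] := acc_facts1 (hacc u0).
  have [w _ /andP[_ /eqP hw]] := h hd.
  have := hmin w isT; rewrite hw.
  by move: hd; case: (Du u0) => //= n _; rewrite ltnn.
have huniq v : Du v = 0 -> v = u0.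
  move=> hv; apply: hinj.
  have [_ _ h3 _ _] := acc_facts1 (hacc v).
  have [_ _ h3' _ _] := acc_facts1 (hacc u0).
  move: h3 h3'; rewrite hv hu0 eqxx => /esym/eqP -> /esym/eqP ->.
  exact: hRID.
exists u0; split => //.
  move=> u hu; have [_ _ _ _ h] := acc_facts1 (hacc u); apply: h.
  by apply/eqP => /huniq /eqP; rewrite (negbTE hu).
have hch u v : chG u v = (Du v != 0) && (par v == u).
  rewrite /chG; case hd: (Du v != 0); last by rewrite !andbF.
  have [_ _ _ h _] := acc_facts1 (hacc v).
  have [w hw /andP[/eqP hwid _]] := h hd.
  rewrite /par; case: pickP => [w' /eqP hw' | hn]; last by move: (hn w); rewrite hwid eqxx.
  have ww : w' = w by apply: hinj; rewrite hw' hwid.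
  rewrite ww andbT /=; apply/idP/idP.
    by move=> /andP[_ /eqP hp]; apply/eqP/hinj; rewrite -hp hwid.
  move=> /eqP wu; subst w; rewrite wu in hw hwid *.
  by rewrite adj_ports hsym -adj_ports hw hwid eqxx.
have hroot : forall u, ~~ (Du u != 0) = (u == u0).
  by move=> u; rewrite negbK; apply/eqP/eqP => [/huniq|->].
have hF u : (FVr r u = (Xr r u - Ee u) * \prod_(v | chG u v) FVr r v)%R.
  by case: (acc_facts2 (hacc u)).
have hG u : (GVr r u = (Xr r u - Su u) * \prod_(v | chG u v) GVr r v)%R.
  by case: (acc_facts2 (hacc u)).
have hF0 v : Du v != 0 -> FVr r v != 0%R by case: (acc_facts2 (hacc v)).
have hG0 v : Du v != 0 -> GVr r v != 0%R by case: (acc_facts2 (hacc v)).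
have tF := @tele_prod _ _ (FVr r) (fun u => Xr r u - Ee u)%R (fun v => Du v != 0) par chG hch hF0 hF.
have tG := @tele_prod _ _ (GVr r) (fun u => Xr r u - Su u)%R (fun v => Du v != 0) par chG hch hG0 hG.
rewrite (big_pred1 u0 hroot) in tF; rewrite (big_pred1 u0 hroot) in tG.
have [_ _ _ _ /(_ hu0) [hFG hXr]] := acc_facts2 (hacc u0).
have e1 : (\prod_u (Xr r u0 - Ee u) = FVr r u0)%R.
  by rewrite tF; apply: eq_bigr => u _; rewrite (hX u0 u).
have e2 : (\prod_u (Xr r u0 - Su u) = GVr r u0)%R.
  by rewrite tG; apply: eq_bigr => u _; rewrite (hX u0 u).
by rewrite -hXr e1 e2 hFG.
Qed.

Lemma prod_enumV (R : comNzRingType) (F : V -> R) :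
  (\prod_(u : V) F u = \prod_(u <- enum V) F u)%R.
Proof. by rewrite big_enum; apply: eq_bigl. Qed.

Definition qpoly : {poly Fq} :=
  (\prod_(u : V) ('X - (Ee u)%:P) - \prod_(u : V) ('X - (Su u)%:P))%R.

Lemma root_qpoly x : root qpoly x = (\prod_u (x - Ee u) == \prod_u (x - Su u))%R.
Proof.
by rewrite /root /qpoly hornerD hornerN !horner_prod GRing.subr_eq0;
  under eq_bigr do rewrite hornerXsubC; under [X in _ == X]eq_bigr do rewrite hornerXsubC.
Qed.

Lemma size_qpoly : size qpoly <= N.+1.
Proof.
rewrite /qpoly (leq_trans (size_polyD _ _)) // size_polyN !prod_enumV !size_prod_XsubC.
by rewrite -cardT card_ord maxnn.
Qed.

Lemma card_roots_q : qpoly != 0%R -> #|[pred y : Fq | root qpoly y]| <= N.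
Proof.
move=> hq.
have hall : all (root qpoly) (enum [pred y : Fq | root qpoly y]).
  by apply/allP => y; rewrite mem_enum.
have := max_poly_roots hq hall (enum_uniq _); rewrite -cardE.
by move=> h; rewrite -ltnS (leq_trans h) // size_qpoly.
Qed.

Lemma card_fdec_pre (B : pred Fq) :
  #|[pred t : (mb c N).-tuple bool | B (fdec c N t)]| <= #|[pred y | B y]|.
Proof.
rewrite -(@card_in_imset _ _ (fun t : (mb c N).-tuple bool => fdec c N t)).
  by apply: subset_leq_card; apply/subsetP => y /imsetP[t ht ->]; rewrite inE; move: ht; rewrite inE.
move=> t1 t2 _ _ h; apply: val_inj; apply: (fdec_inj (n := N)) h.
  by rewrite size_tuple.
by rewrite !size_tuple.
Qed.

Lemma up_log_bound : 3 * N < 2 ^ mb c N.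
Proof.
have h1 : N <= 2 ^ up_log 2 N by apply: up_logP.
have h2 : 2 ^ (up_log 2 N).+2 <= 2 ^ mb c N by rewrite leq_exp2l // /mb /mk; lia.
apply: leq_trans h2; rewrite !expnS.
have : 0 < 2 ^ up_log 2 N by rewrite expn_gt0.
lia.
Qed.

Lemma sound : ~ distinctness I -> 3 * n_accept (@dec c kid) ports P1 P2 < n_coins (mb c) N.
Proof.
move=> hnd.
have [u1 [u2 [h12 hin]]] : exists u1 u2, u1 != u2 /\ inst_input I u1 = inst_input I u2.
  case: (boolP [exists u1, exists u2, (u1 != u2) && (inst_input I u1 == inst_input I u2)]).
    by move=> /existsP[u1 /existsP[u2 /andP[h /eqP e]]]; exists u1, u2.
  move=> hn; exfalso; apply: hnd => u v huv; apply/negP => /eqP e; move/negP: hn; apply.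
  by apply/existsP; exists u; apply/existsP; exists v; rewrite huv e eqxx.
have NT : 0 < N by apply: (leq_ltn_trans (leq0n u1) (ltn_ord u1)).
have hT := up_log_bound.
rewrite /n_coins card_ffun card_tuple card_bool card_ord.
case: (posnP (n_accept (@dec c kid) ports P1 P2)) => [-> | ]; first by rewrite muln0 !expn_gt0.
move/card_gt0P => [r0]; rewrite inE => /forallP hacc0.
have [u0 [hu0 huniq hW _]] := @L_struct r0 u1 hacc0.
have hq : qpoly != 0%R.
  apply/negP => /eqP hq0.
  have hp : perm_eq [seq Ee u | u <- enum V] [seq Su u | u <- enum V].
    apply: prod_XsubC_perm; rewrite !big_map.
    by apply/eqP; rewrite -GRing.subr_eq0; apply/eqP; exact: hq0.
  have hW1 : #|[pred u | ~~ (key (Ee u) < key (Su u))]| <= 1.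
    apply/card_le1_eqP => x y; rewrite !inE => hx hy.
    have ex : x = u0 by apply/eqP; apply/negPn/negP => /hW; rewrite (negbTE hx).
    have ey : y = u0 by apply/eqP; apply/negPn/negP => /hW; rewrite (negbTE hy).
    by rewrite ex ey.
  by have := key_distinct hp hW1 h12; rewrite /Ee hin eqxx.
have hsub : n_accept (@dec c kid) ports P1 P2 <=
    #|[pred r : {ffun V -> (mb c N).-tuple bool} | root qpoly (fdec c N (r u0))]|.
  apply: subset_leq_card; apply/subsetP => r; rewrite !inE => /forallP hacc.
  have [u0' [hu0' _ _ hprod]] := @L_struct r u1 hacc.
  by rewrite -(huniq _ hu0') root_qpoly hprod eqxx.
rewrite (card_ffun_at u0 (fun t : (mb c N).-tuple bool => root qpoly (fdec c N t))) card_tuple card_bool card_ord in hsub.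
have hB := card_fdec_pre (root qpoly).
have hR := card_roots_q hq.
have hA : 0 < (2 ^ mb c N) ^ N.-1 by rewrite expn_gt0 expn_gt0.
rewrite -[N in _ ^ N](prednK NT) expnS.
apply: (@leq_ltn_trans (3 * (N * (2 ^ mb c N) ^ N.-1))).
  rewrite leq_mul2l /=; apply: (leq_trans hsub); rewrite leq_mul2r.
  by apply/orP; right; apply: (leq_trans hB hR).
by rewrite mulnA ltn_pmul2r.
Qed.

End Sound.


Section Compl.
Variables (c kid : nat) (I : instance (dist_input c)).
Hypothesis hwf : wf_instance kid I.
Variable ports : 'I_(inst_n I) -> seq 'I_(inst_n I).
Hypothesis hpn : port_numbering ports.
Hypothesis hdist : distinctness I.

Local Notation N := (inst_n I).
Local Notation V := ('I_(inst_n I)).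
Local Notation ID := (inst_id I).
Local Notation adj := (inst_adj I).
Local Notation Fq := (Fn c (inst_n I)).
Local Notation RT := {ffun 'I_(inst_n I) -> (mb c (inst_n I)).-tuple bool}.
Local Notation W := (Wd c kid (inst_n I)).

Let hsym : symmetric adj := match hwf with And5 h _ _ _ _ => h end.
Let hconn : forall u v, connect adj u v := match hwf with And5 _ _ h _ _ => h end.
Let hinj : injective ID := match hwf with And5 _ _ _ h _ => h end.
Let hidb : forall u, ID u < 2 ^ idbits kid N := match hwf with And5 _ _ _ _ h => h end.

Variable u1 : V.

Definition Eh (u : V) : Fq := emb (inst_input I u).
Definition kk (u : V) := key (Eh u).

Lemma Eh_inj : injective Eh.
Proof.
move=> u v /emb_inj h; apply/eqP; apply/negPn/negP => huv.
by move: (hdist huv); rewrite h eqxx.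
Qed.

Lemma kk_inj : injective kk.
Proof. by move=> u v /key_inj /Eh_inj. Qed.

Definition u0 := [arg max_(u > u1) kk u].

Lemma u0_max u : kk u <= kk u0.
Proof. by rewrite /u0; case: (@arg_maxnP _ u1 xpredT kk isT) => i _ /(_ u isT). Qed.

Definition sgm (u : V) : V :=
  if [pick v | kk u < kk v] is Some v0 then [arg min_(v < v0 | kk u < kk v) kk v]
  else [arg min_(v < u) kk v].

Lemma sgm_up u v : kk u < kk v -> kk u < kk (sgm u) /\ kk (sgm u) <= kk v.
Proof.
move=> huv; rewrite /sgm; case: pickP => [v0 hv0 | hn]; last by move: (hn v); rewrite huv.
by case: (@arg_minnP _ v0 (fun w => kk u < kk w) kk hv0) => i hi hmin; split => //; apply: hmin.
Qed.

Lemma sgm_top u : (forall v, kk v <= kk u) -> forall v, kk (sgm u) <= kk v.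
Proof.
move=> hu v; rewrite /sgm; case: pickP => [v0 hv0 | hn].
  by have := hu v0; rewrite leqNgt hv0.
by case: (@arg_minnP _ u xpredT kk isT) => i _ hmin; apply: hmin.
Qed.

Lemma sgm_inj : injective sgm.
Proof.
suff H : forall u u', kk u < kk u' -> sgm u <> sgm u'.
  move=> u u' h; apply: kk_inj; case: (ltngtP (kk u) (kk u')) => // hl.
  - by case: (H _ _ hl h).
  - by case: (H _ _ hl (esym h)).
move=> u u' hl h.
have [hu1 hu2] := sgm_up hl.
case: (boolP [exists v, kk u' < kk v]) => [/existsP[v hv] | hn].
  have [hu'1 _] := sgm_up hv.
  by move: hu2; rewrite h leqNgt hu'1.
have htop : forall v, kk v <= kk u'.
  by move=> v; rewrite leqNgt; apply/negP => hv; move/negP: hn; apply; apply/existsP; exists v.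
have := sgm_top htop u; rewrite -h leqNgt hu1 //.
Qed.

Lemma sgm_lt u : u != u0 -> kk u < kk (sgm u).
Proof.
move=> hu; have hl : kk u < kk u0.
  by rewrite ltn_neqAle u0_max andbT; apply/negP => /eqP /kk_inj /eqP; rewrite (negbTE hu).
by case: (sgm_up hl).
Qed.

Definition Sh (u : V) : Fq := Eh (sgm u).

Definition dd (v : V) := bfsd u0 hconn v.

Definition parh (v : V) : V := odflt v [pick w | adj v w && (dd w == (dd v).-1)].

Lemma parh_spec v : dd v != 0 -> adj v (parh v) /\ dd (parh v) = (dd v).-1.
Proof.
move=> hv; rewrite /parh; case: pickP => [w /andP[h1 /eqP h2] | hn] //.
have hv' : 0 < dd v by rewrite lt0n.
have [w hw] := @bfsd_par _ _ u0 hsym hconn v hv'.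
by move: (hn w); rewrite hw.
Qed.

Lemma dd_lt v : dd v < N.
Proof. by have := @bfsd_lt _ _ u0 hconn v; rewrite card_ord. Qed.

Lemma dd0 v : (dd v == 0) = (v == u0).
Proof.
apply/eqP/eqP => [|->]; first exact: bfsd_eq0.
exact: bfsd_u0.
Qed.

Definition P1h (v : V) : bits :=
  nenc c kid N (ID u0) ++ nenc c kid N (ID (parh v)) ++ nenc c kid N (dd v) ++ fenc kid (Sh v).

Lemma W_id u : ID u < 2 ^ W.
Proof. by apply: (leq_trans (hidb u)); rewrite leq_exp2l // /idbits /Wd leq_addr. Qed.

Lemma W_N : N < 2 ^ W.
Proof.
apply: (@leq_ltn_trans (2 ^ up_log 2 N)); first exact: up_logP.
by rewrite ltn_exp2l // /Wd /mb /mk; lia.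
Qed.

Lemma dec_rid v : rid c kid N (P1h v) = ID u0.
Proof. by rewrite /rid /gtf /P1h getf0 ?size_nat2bits // nat2bitsK // W_id. Qed.
Lemma dec_pid v : pid c kid N (P1h v) = ID (parh v).
Proof. by rewrite /pid /gtf /P1h getfS ?size_nat2bits // getf0 ?size_nat2bits // nat2bitsK // W_id. Qed.
Lemma dec_dst v : dst c kid N (P1h v) = dd v.
Proof.
rewrite /dst /gtf /P1h !getfS ?size_nat2bits // getf0 ?size_nat2bits // nat2bitsK //.
exact: ltn_trans (dd_lt v) W_N.
Qed.
Lemma dec_sv v : sv c kid N (P1h v) = Sh v.
Proof. by rewrite /sv /gtf /P1h !getfS ?size_nat2bits //= take_oversize ?size_nat2bits // fencK. Qed.

Definition chH (u v : V) := (v \in ports u) && ((ID (parh v) == ID u) && (dd v != 0)).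

Lemma chH_eq u v : chH u v = (dd v != 0) && (parh v == u).
Proof.
rewrite /chH; case hd: (dd v != 0); last by rewrite !andbF.
rewrite andbT (inj_eq hinj); apply/idP/idP => [/andP[] //|/eqP hp].
have [ha _] := parh_spec hd.
by rewrite hp eqxx andbT adj_ports // -hp hsym.
Qed.

Lemma chH_dd u v : chH u v -> dd v = (dd u).+1.
Proof.
rewrite chH_eq => /andP[hd /eqP hp]; have [_ h] := parh_spec hd.
by move: h hd; rewrite hp => ->; case: (dd v).
Qed.

Fixpoint valh (f : V -> Fq) (k : nat) (u : V) : Fq :=
  if k is k'.+1 then (f u * \prod_(v | chH u v) valh f k' v)%R else 1%R.

Lemma valh_stable f k : forall u, N - dd u <= k -> valh f k u = valh f k.+1 u.
Proof.
elim: k => [|k IH] u hu.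
  by have := dd_lt u; move: hu; lia.
rewrite [LHS]/= [RHS]/=; congr (_ * _)%R; apply: eq_bigr => v hv.
apply: IH; have := chH_dd hv; have := dd_lt v; move: hu; lia.
Qed.

Lemma valh_fix f u : valh f N u = (f u * \prod_(v | chH u v) valh f N v)%R.
Proof. by rewrite (@valh_stable f N u (leq_subr _ _)). Qed.

Lemma valh_nz f : (forall v, f v != 0%R) -> forall k u, valh f k u != 0%R.
Proof.
move=> hf; elim=> [|k IH] u /=; first exact: oner_neq0.
by rewrite mulf_neq0 //; apply/prodf_neq0 => v _; apply: IH.
Qed.

Definition xh (r : RT) : Fq := fdec c N (r u0).
Definition Fh (r : RT) := valh (fun v => xh r - Eh v)%R N.
Definition Gh (r : RT) := valh (fun v => xh r - Sh v)%R N.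
Definition P2h (r : RT) (v : V) : bits := fenc kid (xh r) ++ fenc kid (Fh r v) ++ fenc kid (Gh r v).

Lemma size_fenc (y : Fq) : size (fenc kid y) = W.
Proof. exact: size_nat2bits. Qed.

Lemma dec_xv r v : xv c kid N (P2h r v) = xh r.
Proof. by rewrite /xv /gtf /P2h getf0 ?size_fenc // fencK. Qed.
Lemma dec_fv r v : fv c kid N (P2h r v) = Fh r v.
Proof. by rewrite /fv /gtf /P2h getfS ?size_fenc // getf0 ?size_fenc // fencK. Qed.
Lemma dec_gv r v : gv c kid N (P2h r v) = Gh r v.
Proof. by rewrite /gv /gtf /P2h !getfS ?size_fenc //= take_oversize ?size_fenc // fencK. Qed.

Lemma accept_honest r : (forall v, xh r != Eh v) -> all_accept (@dec c kid) ports P1h P2h r.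
Proof.
move=> hx.
have hE v : (xh r - Eh v != 0)%R by rewrite GRing.subr_eq0 hx.
have hS v : (xh r - Sh v != 0)%R by rewrite GRing.subr_eq0 /Sh hx.
have hFnz := valh_nz hE; have hGnz := valh_nz hS.
have hroot : forall u, ~~ (dd u != 0) = (u == u0) by move=> u; rewrite negbK dd0.
have tF := @tele_prod _ _ (Fh r) (fun u => xh r - Eh u)%R (fun v => dd v != 0) parh chH chH_eq
   (fun v _ => hFnz N v) (fun u => valh_fix _ u).
have tG := @tele_prod _ _ (Gh r) (fun u => xh r - Sh u)%R (fun v => dd v != 0) parh chH chH_eq
   (fun v _ => hGnz N v) (fun u => valh_fix _ u).
rewrite (big_pred1 u0 hroot) in tF; rewrite (big_pred1 u0 hroot) in tG.
have hFG : Fh r u0 = Gh r u0.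
  by rewrite tF tG /Sh (reindex_inj sgm_inj).
have hch u : [pred v | (v \in ports u) && isch c kid N (ID u) (ID v, P1h v, P2h r v)] =1 chH u.
  by move=> v; rewrite /isch /= dec_pid dec_dst.
apply/forallP => u; rewrite /dec.
apply/and5P; split.
- by rewrite all_map; apply/allP => v _ /=; rewrite !dec_rid.
- by rewrite all_map; apply/allP => v _ /=; rewrite !dec_xv.
- by rewrite dec_dst dec_rid dd0 (inj_eq hinj).
- rewrite dec_dst; case hd: (dd u == 0) => //=.
  have [ha hp] := parh_spec (negbT hd).
  rewrite has_map; apply/hasP; exists (parh u); first by rewrite adj_ports.
  by rewrite /= dec_pid dec_dst hp !eqxx.
apply/and5P; split.
- rewrite dec_dst dec_sv; case hd: (dd u == 0) => //=.
  by apply: sgm_lt; rewrite -dd0 hd.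
- rewrite big_nbrs ?(hpn u).1 // (eq_bigl _ _ (hch u)) dec_fv dec_xv.
  by rewrite /Fh valh_fix; under [X in _ == (_ * X)%R]eq_bigr do rewrite dec_fv.
- rewrite big_nbrs ?(hpn u).1 // (eq_bigl _ _ (hch u)) dec_gv dec_xv dec_sv.
  by rewrite /Gh valh_fix; under [X in _ == (_ * X)%R]eq_bigr do rewrite dec_gv.
- by rewrite dec_fv; apply: hFnz.
apply/andP; split; first by rewrite dec_gv; apply: hGnz.
rewrite dec_dst dec_fv dec_gv dec_xv; case hd: (dd u == 0) => //=.
by move: hd; rewrite dd0 => /eqP ->; rewrite hFG !eqxx.
Qed.

Lemma compl : 2 * n_coins (mb c) N < 3 * n_accept (@dec c kid) ports P1h P2h.
Proof.
have NT : 0 < N by apply: (leq_ltn_trans (leq0n u1) (ltn_ord u1)).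
have hT : 3 * N < 2 ^ mb c N by apply: up_log_bound.
pose B := [pred t : (mb c N).-tuple bool | [exists v, fdec c N t == Eh v]].
have hB : #|B| <= N.
  apply: (leq_trans (card_fdec_pre (fun y : Fq => [exists v, y == Eh v]))).
  apply: (@leq_trans #|[set Eh v | v in V]|); last by rewrite (leq_trans (leq_imset_card _ _)) // card_ord.
  by apply: subset_leq_card; apply/subsetP => y; rewrite inE => /existsP[v /eqP ->]; apply: imset_f.
have hacc : #|[pred r : RT | ~~ B (r u0)]| <= n_accept (@dec c kid) ports P1h P2h.
  apply: subset_leq_card; apply/subsetP => r; rewrite !inE => hr.
  apply: accept_honest => v; apply/negP => /eqP hv; move/negP: hr; apply.
  by apply/existsP; exists v; rewrite -hv.
have hC : #|[pred r : RT | B (r u0)]| + #|[pred r : RT | ~~ B (r u0)]| = #|RT|.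
  by rewrite -(cardC [pred r : RT | B (r u0)]); congr (_ + _); apply: eq_card => r; rewrite !inE.
rewrite (card_ffun_at u0 B) card_tuple card_bool card_ord in hC.
rewrite card_ffun card_tuple card_bool card_ord in hC.
rewrite /n_coins card_ffun card_tuple card_bool card_ord.
set A := (2 ^ mb c N) ^ N.-1 in hC *.
have hA : 0 < A by rewrite expn_gt0 expn_gt0.
have eTN : (2 ^ mb c N) ^ N = 2 ^ mb c N * A by rewrite /A -expnS prednK.
rewrite eTN in hC *.
have h1 : #|B| * A <= N * A by rewrite leq_mul2r hB orbT.
have h2 : 3 * (N * A) < 2 ^ mb c N * A by rewrite mulnA ltn_pmul2r.
move: hacc hC h1 h2; set X := 2 ^ mb c N * A; set Y := N * A; set Z := #|B| * A; lia.
Qed.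

End Compl.

Theorem mainTheorem6 (c kid : nat) :
  dMAM_Olog kid (distinctness (c := c)).
Proof.
exists (4 * (kid + c + 3)), (fun n => 4 * Wd c kid n); split.
  move=> n; rewrite /Wd /mb /mk.
  set t := trunc_log 2 n; set u := up_log 2 n.
  have hu : u <= t.+1 by apply: up_log_min => //; apply: ltnW; apply: trunc_log_ltn.
  have hcu : c * u <= c * t.+1 by rewrite leq_mul2l hu orbT.
  have e1 : 4 * (kid + c + 3) * t.+1 = 4 * (kid * t.+1) + 4 * (c * t.+1) + 12 * t.+1 by nia.
  rewrite e1; move: hcu hu; set a := kid * t.+1; set b := c * u; set d := c * t.+1; lia.
exists (mb c), (@dec c kid); split.
  by move=> n; apply: (leq_trans (mb_le_Wd c kid n)); rewrite leq_pmull.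
move=> I hwf ports hpn; split.
- move=> hd.
  case: (posnP (inst_n I)) => [N0 | NT].
    exists (fun _ => [::]), (fun _ _ => [::]); split => //; split => //.
    have hc : n_coins (mb c) (inst_n I) = 1 by rewrite /n_coins card_ffun card_ord N0 expn0.
    have ha : n_accept (@dec c kid) ports (fun _ => [::]) (fun _ _ => [::]) = 1.
      rewrite /n_accept -hc /n_coins; apply: eq_card => r; rewrite !inE.
      by apply/forallP => u; exfalso; case: u => m; rewrite N0.
    by rewrite hc ha.
  pose u1 : 'I_(inst_n I) := Ordinal NT.
  exists (P1h hwf u1), (P2h hwf ports u1); split; last split.
  + by move=> u; rewrite /P1h !size_cat !size_nat2bits; lia.
  + by move=> r u; rewrite /P2h !size_cat !size_nat2bits; lia.
  + exact: (compl hwf hpn hd u1).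
- move=> hnd P1 P2; exact: (sound hwf hpn P1 P2 hnd).
Qed.
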